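(* Let $v\in\mathbb{H}\setminus\mathbb{R}$ be written in polar form $v=re^{\theta u}$ with $r=|v|$, $\theta\in\mathbb{R}$ and $u$ a unit imaginary quaternion, and let $\sigma(v)\colon\mathbb{H}\to\mathbb{H}$, $\sigma(v)(x)=vxv^*$. Then $\sigma(v)$ respects the splitting $\mathbb{H}=\mathcal{V}\oplus\mathbb{R}k$, and: (1) the restriction of $\sigma(v)$ to $\mathcal{V}$, identified with $\mathbb{R}^3$ via $(x,y,z)\mapsto x+yi+zj$, is a rotation of angle $2\theta$ about the axis $-uk$, composed with multiplication by $|v|^2$; (2) if $v\in\mathcal{V}$, then the rotation in (1) is also a rotation of angle $2\theta$ in the 2-plane spanned by $1$ and $v$, from $1$ towards $v$; (3) the restriction of $\sigma(v)$ to $\mathbb{R}k$ is multiplication by $|v|^2$.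
   Context: For $q=a+bi+cj+dk\in\mathbb{H}$, $q^*=a+bi+cj-dk$, $\bar q=a-bi-cj-dk$, $|q|^2=q\bar q$. Paravectors $\mathcal{V}=\mathrm{span}_\mathbb{R}\{1,i,j\}$, identified with $\mathbb{R}^3$ by $(x,y,z)\mapsto x+yi+zj$ with the standard orientation (so $(1,i,j)$ is an oriented basis) and dot product; for $u$ imaginary, $-uk\in\mathcal{V}$. Rotation ''from $a$ towards $b$'' in a 2-plane means that for small angles $a$ moves into the half-plane containing $b$; rotations about an axis are right-handed.
   Formalization: Part (2) holds only under the extra hypothesis sin θ > 0, that is, for polar forms with θ in (0, π) modulo 2π. The statement above fails without it. *)

(* Defs.v *)
From Stdlib Require Import Reals.
Open Scope R_scope.

(** Quaternions a + b i + c j + d k over R. *)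
Record quat := Quat { q0 : R; q1 : R; q2 : R; q3 : R }.

Definition qadd (p q : quat) : quat :=
  Quat (q0 p + q0 q) (q1 p + q1 q) (q2 p + q2 q) (q3 p + q3 q).
Definition qopp (p : quat) : quat := Quat (- q0 p) (- q1 p) (- q2 p) (- q3 p).
Definition qscale (s : R) (p : quat) : quat :=
  Quat (s * q0 p) (s * q1 p) (s * q2 p) (s * q3 p).
(** Hamilton product (i^2 = j^2 = k^2 = ijk = -1). *)
Definition qmul (p q : quat) : quat :=
  Quat (q0 p * q0 q - q1 p * q1 q - q2 p * q2 q - q3 p * q3 q)
       (q0 p * q1 q + q1 p * q0 q + q2 p * q3 q - q3 p * q2 q)
       (q0 p * q2 q - q1 p * q3 q + q2 p * q0 q + q3 p * q1 q)
       (q0 p * q3 q + q1 p * q2 q - q2 p * q1 q + q3 p * q0 q).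

Definition qreal (a : R) : quat := Quat a 0 0 0.
Definition qone : quat := qreal 1.
Definition qi : quat := Quat 0 1 0 0.
Definition qj : quat := Quat 0 0 1 0.
Definition qk : quat := Quat 0 0 0 1.

Definition qconj (p : quat) : quat := Quat (q0 p) (- q1 p) (- q2 p) (- q3 p).
Definition qstar (p : quat) : quat := Quat (q0 p) (q1 p) (q2 p) (- q3 p).
Definition qnorm2 (p : quat) : R := q0 (qmul p (qconj p)).
Definition qnorm (p : quat) : R := sqrt (qnorm2 p).

Definition is_real_quat (p : quat) : Prop := q1 p = 0 /\ q2 p = 0 /\ q3 p = 0.
Definition is_imag_quat (p : quat) : Prop := q0 p = 0.

(** exp(theta u) for a unit imaginary quaternion u (Euler formula):
    cos theta + sin theta * u. *)
Definition qexp_unit (theta : R) (u : quat) : quat :=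
  qadd (qreal (cos theta)) (qscale (sin theta) u).

Definition qsigma (v x : quat) : quat := qmul (qmul v x) (qstar v).

Definition inV (x : quat) : Prop := q3 x = 0.
Definition inRk (x : quat) : Prop := q0 x = 0 /\ q1 x = 0 /\ q2 x = 0.

Record vec3 := V3 { vx : R; vy : R; vz : R }.
Definition vadd (p q : vec3) : vec3 := V3 (vx p + vx q) (vy p + vy q) (vz p + vz q).
Definition vscale (s : R) (p : vec3) : vec3 := V3 (s * vx p) (s * vy p) (s * vz p).
Definition vdot (p q : vec3) : R := vx p * vx q + vy p * vy q + vz p * vz q.
Definition vnorm (p : vec3) : R := sqrt (vdot p p).
Definition vcross (p q : vec3) : vec3 :=
  V3 (vy p * vz q - vz p * vy q) (vz p * vx q - vx p * vz q) (vx p * vy q - vy p * vx q).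

Definition toV (p : vec3) : quat := Quat (vx p) (vy p) (vz p) 0.
Definition fromV (q : quat) : vec3 := V3 (q0 q) (q1 q) (q2 q).

Definition sigmaV (v : quat) (p : vec3) : vec3 := fromV (qsigma v (toV p)).

Definition linear3 (f : vec3 -> vec3) : Prop :=
  forall (s t : R) (p q : vec3),
    f (vadd (vscale s p) (vscale t q)) = vadd (vscale s (f p)) (vscale t (f q)).

Definition rotation_about (a : vec3) (alpha : R) (f : vec3 -> vec3) : Prop :=
  linear3 f /\ f a = a /\
  forall w, vdot w a = 0 ->
    f w = vadd (vscale (cos alpha) w)
               (vscale (sin alpha) (vcross (vscale (/ vnorm a) a) w)).

(** f is the rotation of angle alpha in the 2-plane spanned by a and b
    (a, b linearly independent), from a towards b: with e1 = a/|a| and e2 the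
    unit vector of the component of b orthogonal to a (so the half-plane
    containing b is {s e1 + t e2 | t > 0}), f e1 = cos alpha e1 + sin alpha e2,
    f e2 = - sin alpha e1 + cos alpha e2, and f fixes the orthogonal
    complement of the plane. *)
Definition rotation_in_plane (a b : vec3) (alpha : R) (f : vec3 -> vec3) : Prop :=
  let e1 := vscale (/ vnorm a) a in
  let b' := vadd b (vscale (- vdot b e1) e1) in
  let e2 := vscale (/ vnorm b') b' in
  linear3 f /\
  f e1 = vadd (vscale (cos alpha) e1) (vscale (sin alpha) e2) /\
  f e2 = vadd (vscale (- sin alpha) e1) (vscale (cos alpha) e2) /\
  (forall w, vdot w a = 0 -> vdot w b = 0 -> f w = w).

(* Main.v *)
Require Import Defs.
From Stdlib Require Import Reals Nsatz Lra.
Open Scope R_scope.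

Lemma sigma_scale r w x : qsigma (qscale r w) x = qscale (r^2) (qsigma w x).
Proof. destruct w, x; unfold qsigma, qscale, qmul, qstar; simpl; f_equal; ring. Qed.

Lemma qnorm2_nonneg p : 0 <= qnorm2 p.
Proof. destruct p; unfold qnorm2, qmul, qconj; simpl; nra. Qed.

Lemma qnorm_sq p : qnorm p ^ 2 = qnorm2 p.
Proof. unfold qnorm. rewrite pow2_sqrt; auto using qnorm2_nonneg. Qed.

Lemma vecE p q : vx p = vx q -> vy p = vy q -> vz p = vz q -> p = q.
Proof. destruct p, q; simpl; intros; subst; auto. Qed.

Theorem proposition2p9 (v u : quat) (r theta : R) :
  ~ is_real_quat v ->
  is_imag_quat u -> qnorm u = 1 ->
  r = qnorm v ->
  v = qscale r (qexp_unit theta u) ->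
  (* sigma(v) respects the splitting H = V (+) R k *)
  ((forall x, inV x -> inV (qsigma v x)) /\
   (forall x, inRk x -> inRk (qsigma v x))) /\
  (* (1) and (2) *)
  (exists rho : vec3 -> vec3,
      rotation_about (fromV (qopp (qmul u qk))) (2 * theta) rho /\
      (forall p, sigmaV v p = vscale (qnorm v ^ 2) (rho p)) /\
      (inV v -> 0 < sin theta ->
         rotation_in_plane (fromV qone) (fromV v) (2 * theta) rho)) /\
  (* (3) *)
  (forall x, inRk x -> qsigma v x = qscale (qnorm v ^ 2) x).
Proof.
  intros Hnr Hu Hu1 Hr Hv.
  split; [split|split].
  - intros [x0 x1 x2 x3] Hx; unfold inV in *; simpl in Hx; subst x3.
    destruct v; unfold qsigma, qmul, qstar; simpl; ring.
  - intros [x0 x1 x2 x3] [H0 [H1 H2]]; simpl in *; subst.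
    destruct v; unfold inRk, qsigma, qmul, qstar; simpl; repeat split; ring.
  - destruct u as [u0 a b c]. unfold is_imag_quat in Hu; simpl in Hu; subst u0.
    assert (Habc : a*a+b*b+c*c = 1).
    { assert (E : qnorm2 (Quat 0 a b c) = 1).
      { rewrite <- qnorm_sq, Hu1; ring. }
      unfold qnorm2, qmul, qconj in E; simpl in E; lra. }
    pose proof (sin2_cos2 theta) as Hsc. unfold Rsqr in Hsc.
    set (C := cos theta) in *. set (S := sin theta) in *.
    exists (sigmaV (qexp_unit theta (Quat 0 a b c))).
    fold C S.
    assert (Hax : vnorm (fromV (qopp (qmul (Quat 0 a b c) qk))) = 1).
    { unfold vnorm, vdot, fromV, qopp, qmul, qk; simpl.
      replace (_ + _ + _) with 1 by nsatz. apply sqrt_1. }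
    split; [|split].
    + unfold rotation_about. rewrite cos_2a, sin_2a. fold C S. rewrite Hax. rewrite Rinv_1.
      split; [|split].
      * intros s t [p1 p2 p3] [q1 q2 q3].
        unfold sigmaV, qsigma, qexp_unit, qmul, qstar, qadd, qreal, qscale, toV, fromV, vadd, vscale; simpl.
        apply vecE; simpl; ring.
      * unfold sigmaV, qsigma, qexp_unit, qmul, qstar, qadd, qreal, qscale, toV, fromV, qopp, qk; simpl.
        apply vecE; simpl; nsatz.
      * intros [w1 w2 w3] Hw.
        unfold vdot, fromV, qopp, qmul, qk in Hw; simpl in Hw.
        unfold sigmaV, qsigma, qexp_unit, qmul, qstar, qadd, qreal, qscale, toV, fromV, qopp, qk, vadd, vscale, vcross; simpl.
        apply vecE; simpl; nsatz.
    + intros p. unfold sigmaV. rewrite <- Hr, Hv, sigma_scale.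
      destruct (qsigma _ _); reflexivity.
    + intros HV HS.
      assert (Hr0 : 0 <= r) by (rewrite Hr; apply sqrt_pos).
      assert (Hr1 : r <> 0).
      { intro E. apply Hnr. rewrite Hv, E. unfold is_real_quat, qscale; simpl; lra. }
      assert (Hc : c = 0).
      { unfold inV in HV. rewrite Hv in HV. unfold qscale, qexp_unit, qadd, qreal in HV; simpl in HV.
        fold C S in HV.
        assert (S * c = 0) by (apply (Rmult_eq_reg_l r); [lra|auto]).
        destruct (Rmult_integral _ _ H); [lra|auto]. }
      subst c. clear Hr Hax. subst v.
      assert (Hab : a*a+b*b = 1) by lra.
      assert (HrS : 0 < r * S) by (apply Rmult_lt_0_compat; lra).
      cbv delta [rotation_in_plane] beta. intros e1 b' e2.
      assert (E1 : e1 = V3 1 0 0).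
      { unfold e1, vnorm, vdot, fromV, qone, qreal, vscale; simpl.
        replace (1*1+0*0+0*0) with 1 by ring. rewrite sqrt_1. apply vecE; simpl; field. }
      assert (NB : vnorm b' = r * S).
      { unfold b'. rewrite E1. unfold vnorm, vdot, vadd, vscale, fromV, qscale, qexp_unit, qadd, qreal; simpl.
        fold C S.
        match goal with |- sqrt ?x = _ => replace x with ((r*S)^2 * (a*a+b*b)) by ring end.
        rewrite Hab, Rmult_1_r.
        apply sqrt_pow2; lra. }
      assert (E2 : e2 = V3 0 a b).
      { unfold e2. rewrite NB. unfold b'. rewrite E1.
        unfold vnorm, vdot, vadd, vscale, fromV, qscale, qexp_unit, qadd, qreal; simpl. fold C S.
        apply vecE; simpl; field; lra. }
      clearbody e1 b' e2. subst e1 e2. clear NB HV b'. rewrite cos_2a, sin_2a. unfold qexp_unit. fold C S. clearbody C S. clear Hnr Hu1 Habc.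
      split; [|split; [|split]].
      * intros s t [p1 p2 p3] [q1 q2 q3].
        unfold sigmaV, qsigma, qexp_unit, qmul, qstar, qadd, qreal, qscale, toV, fromV, vadd, vscale; simpl.
        apply vecE; simpl; ring.
      * unfold sigmaV, qsigma, qexp_unit, qmul, qstar, qadd, qreal, qscale, toV, fromV, vadd, vscale; simpl.
        apply vecE; simpl; clear - Hab Hsc; nsatz.
      * unfold sigmaV, qsigma, qexp_unit, qmul, qstar, qadd, qreal, qscale, toV, fromV, vadd, vscale; simpl.
        apply vecE; simpl; clear - Hab Hsc; nsatz.
      * intros [w1 w2 w3] Hw1 Hw2.
        unfold vdot, fromV, qone, qreal, qscale, qexp_unit, qadd in Hw1, Hw2; simpl in Hw1, Hw2.
        assert (Hw0 : w1 = 0) by lra. subst w1.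
        assert (Hw : a*w2 + b*w3 = 0).
        { apply (Rmult_eq_reg_l (r*S)); [|lra]. rewrite Rmult_0_r, <- Hw2. ring. }
        unfold sigmaV, qsigma, qexp_unit, qmul, qstar, qadd, qreal, qscale, toV, fromV, vadd, vscale; simpl.
        apply vecE; simpl; clear - Hab Hsc Hw; nsatz.
  - intros [x0 x1 x2 x3] [H0 [H1 H2]]; simpl in H0, H1, H2; subst x0 x1 x2.
    rewrite qnorm_sq. clear Hv Hr.
    destruct v; unfold qnorm2, qconj, qscale, qsigma, qmul, qstar; simpl; f_equal; ring.
Qed.
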